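(* Let $G=(V,E,\boldsymbol{X})$ be a connected graph with at least two nodes, node features $\boldsymbol{x}_v\in\mathbb{R}^d$, a finite label set $\mathcal{Y}=\{1,\dots,|\mathcal{Y}|\}$, a nonempty set $V_{\text{train}}\subset V$ of labeled nodes with one-hot labels $\boldsymbol{y}_v$, and $V_{\text{test}}=V\setminus V_{\text{train}}$. Consider the TFGNN with $L$ layers $$\boldsymbol{h}^{(0)}_v=[\boldsymbol{x}_v;\tilde{\boldsymbol{y}}_v],$$ $$\boldsymbol{h}^{(l)}_v=\begin{cases}\mathrm{ReLU}\big(\boldsymbol{S}^{(l)}\boldsymbol{h}^{(l-1)}_v+\frac{1}{|\mathcal{N}(v)|}\sum_{u\in\mathcal{N}(v)}\boldsymbol{V}^{(l)}\boldsymbol{h}^{(l-1)}_u\big) & (v\in V_{\text{train}}),\\ \mathrm{ReLU}\big(\boldsymbol{T}^{(l)}\boldsymbol{h}^{(l-1)}_v+\frac{1}{|\mathcal{N}(v)|}\sum_{u\in\mathcal{N}(v)}\boldsymbol{W}^{(l)}\boldsymbol{h}^{(l-1)}_u\big) & (v\in V_{\text{test}}),\end{cases}\quad l\in[L],$$ $$\hat{\boldsymbol{y}}_v=\mathrm{softmax}(\boldsymbol{U}\boldsymbol{h}^{(L)}_v),$$ where, with $m=1+|\mathcal{Y}|$, the parameters satisfy for all $l\in[L]$: $\boldsymbol{S}^{(l)}_{-m:,:-m}=0$, $\boldsymbol{S}^{(l)}_{-m:,-m:}=\boldsymbol{I}_m$, $\boldsymbol{V}^{(l)}_{-m:}=0$,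 $\boldsymbol{T}^{(l)}_{-m:}=0$, $\boldsymbol{W}^{(l)}_{-m:,:-m}=0$, $\boldsymbol{W}^{(l)}_{-m:,-m:}=\boldsymbol{I}_m$, and $\boldsymbol{U}_{:,:-|\mathcal{Y}|}=0$, $\boldsymbol{U}_{:,-|\mathcal{Y}|:}=\boldsymbol{I}_{|\mathcal{Y}|}$, all other entries being arbitrary. Then for every $v\in V$ and $i\in\mathcal{Y}$, $$\boldsymbol{h}^{(L)}_{v,-(|\mathcal{Y}|-i+1)}=p_{L,v,i},\qquad \operatorname{argmax}_i\hat{\boldsymbol{y}}_{vi}=\operatorname{argmax}_i p_{L,v,i},$$ and, for $v\in V_{\text{test}}$, $p_{L,v,i}\to\hat{\boldsymbol{y}}^{\text{LP}}_{v,i}$ as $L\to\infty$.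
   Context: Numpy-like indexing: for a matrix $\boldsymbol{M}$, $\boldsymbol{M}_{-m:,:}$ (written $\boldsymbol{M}_{-m:}$) is its last $m$ rows, $\boldsymbol{M}_{:,-m:}$ its last $m$ columns, $\boldsymbol{M}_{:,:-m}$ all columns except the last $m$, and $\boldsymbol{h}_{-j}$ is the $j$-th entry from the end of a vector $\boldsymbol{h}$. $\mathcal{N}(v)$ is the set of neighbors of $v$. The label feature is $\tilde{\boldsymbol{y}}_v=[1;\boldsymbol{y}_v]$ for $v\in V_{\text{train}}$ and $\tilde{\boldsymbol{y}}_v=\mathbf{0}_{1+|\mathcal{Y}|}$ for $v\in V_{\text{test}}$, so $\boldsymbol{h}^{(0)}_v\in\mathbb{R}^{d+1+|\mathcal{Y}|}$; each $\boldsymbol{h}^{(l)}_v\in\mathbb{R}^{D_l}$ with $D_0=d+1+|\mathcal{Y}|$ and $D_l\ge 1+|\mathcal{Y}|$, the matrices $\boldsymbol{S}^{(l)},\boldsymbol{T}^{(l)},\boldsymbol{V}^{(l)},\boldsymbol{W}^{(l)}\in\mathbb{R}^{D_l\times D_{l-1}}$ and $\boldsymbol{U}\in\mathbb{R}^{|\mathcal{Y}|\times D_L}$. The one-hot vector $\boldsymbol{y}_v$ has its $i$-th coordinate equal to $1$ iff $v$ has label $i$. Define $p_{l,v,i}$ as the probability that a simple random walk started at $v$ (each step moves to a uniformly random neighbor) hits $V_{\text{train}}$ within $l$ steps and the first node of $V_{\text{train}}$ it hits has label $i$ (so $p_{l,v,i}=1[i=\text{label of } v]$ for $v\in V_{\text{train}}$).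 Label propagation output: $\hat{\boldsymbol{y}}^{\text{LP}}_{v,i}$ is the probability that the first node of $V_{\text{train}}$ hit by a simple random walk from $v$ has label $i$. *)

(* Defs.v *)
From HB Require Import structures.
From mathcomp Require Import all_boot all_order all_algebra.
From mathcomp Require Import all_classical all_reals all_analysis.
Set Implicit Arguments. Unset Strict Implicit. Unset Printing Implicit Defensive.
Import Order.TTheory GRing.Theory Num.Theory.
Import numFieldNormedType.Exports.
Local Open Scope ring_scope.

Section TFGNN.
Variables (R : realType) (V : finType) (adj : rel V).

Definition nbrs (v : V) : {set V} := [set u | adj v u].

Definition simple_connected_graph : Prop :=
  [/\ symmetric adj, irreflexive adj, (forall u v, connect adj u v) & 1 < #|V|]%N.

Definition relu n (z : 'cV[R]_n) : 'cV[R]_n := map_mx (fun a => Num.max a 0) z.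
Definition softmax n (z : 'cV[R]_n) : 'cV[R]_n :=
  \col_i (expR (z i 0) / \sum_j expR (z j 0)).

Definition mean_nbr p q (M : 'M[R]_(p, q)) (h : V -> 'cV[R]_q) (v : V) : 'cV[R]_p :=
  (#|nbrs v|%:R)^-1 *: \sum_(u in nbrs v) (M *m h u).

Variables (K : nat) (Vtrain : {set V}) (lab : V -> 'I_K).

Definition onehot (c : 'I_K) : 'cV[R]_K := \col_i (i == c)%:R.
Definition label_feat (v : V) : 'cV[R]_(1 + K) :=
  if v \in Vtrain then col_mx 1 (onehot (lab v)) else 0.

(* Layer widths: D_l = e l + (1 + K), with D_0 = d + 1 + |Y| where d = e 0.
   Layer l+1 (l : nat) uses S l, V l, T l, W l : 'M_(D_(l+1), D_l). *)
Variables (e : nat -> nat) (x : V -> 'cV[R]_(e 0%N))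
  (S Vw T W : forall l : nat, 'M[R]_(e l.+1 + (1 + K), e l + (1 + K))).

Fixpoint tfgnn (l : nat) : V -> 'cV[R]_(e l + (1 + K)) :=
  match l return V -> 'cV[R]_(e l + (1 + K)) with
  | 0%N => fun v => col_mx (x v) (label_feat v)
  | l'.+1 => fun v =>
      relu (if v \in Vtrain
            then S l' *m tfgnn l' v + mean_nbr (Vw l') (tfgnn l') v
            else T l' *m tfgnn l' v + mean_nbr (W l') (tfgnn l') v)
  end.

End TFGNN.

Section RandomWalk.
Variables (R : realType) (V : finType) (adj : rel V).
Variables (K : nat) (Vtrain : {set V}) (lab : V -> 'I_K).

Definition trans (u w : V) : R := if adj u w then (#|nbrs adj u|%:R)^-1 else 0.

Definition walk_prob l (w : {ffun 'I_l.+1 -> V}) : R :=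
  \prod_(j < l) trans (w (widen_ord (leqnSn l) j)) (w (lift ord0 j)).

Definition first_hit_label l (w : {ffun 'I_l.+1 -> V}) (i : 'I_K) : bool :=
  [exists k : 'I_l.+1, [&& w k \in Vtrain,
     [forall j : 'I_l.+1, (j < k)%N ==> (w j \notin Vtrain)] & lab (w k) == i]].

Definition p_hit (l : nat) (v : V) (i : 'I_K) : R :=
  \sum_(w : {ffun 'I_l.+1 -> V} | (w ord0 == v) && first_hit_label w i) walk_prob w.

Definition hit_exactly (k : nat) (v : V) (i : 'I_K) : R :=
  \sum_(w : {ffun 'I_k.+1 -> V} | [&& w ord0 == v,
        [forall j : 'I_k.+1, (j < k)%N ==> (w j \notin Vtrain)],
        w ord_max \in Vtrain & lab (w ord_max) == i]) walk_prob w.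

(* label propagation output: probability that the first node of Vtrain hit
   by the (infinite) random walk from v has label i, computed by
   sigma-additivity over the (disjoint) events {first hitting time = k} *)
Definition lp_output (v : V) (i : 'I_K) : R := limn (series (fun k => hit_exactly k v i)).

End RandomWalk.

(* Main.v *)
Require Import Defs.
From HB Require Import structures.
From mathcomp Require Import all_boot all_order all_algebra.
From mathcomp Require Import all_classical all_reals all_analysis.
Import Order.TTheory GRing.Theory Num.Theory.
Import numFieldNormedType.Exports.
Local Open Scope ring_scope.
Set Implicit Arguments. Unset Strict Implicit. Unset Printing Implicit Defensive.

From mathcomp Require Import lra.
Section W.
Variables (R : realType) (V : finType) (adj : rel V).
Variables (K : nat) (Vtrain : {set V}) (lab : V -> 'I_K).

Definition fcons n (a : V) (t : {ffun 'I_n -> V}) : {ffun 'I_n.+1 -> V} :=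
  [ffun j => if unlift ord0 j is Some j' then t j' else a].
Definition ftail n (w : {ffun 'I_n.+1 -> V}) : {ffun 'I_n -> V} :=
  [ffun j => w (lift ord0 j)].

Lemma fcons0 n a (t : {ffun 'I_n -> V}) : fcons a t ord0 = a.
Proof. by rewrite ffunE unlift_none. Qed.
Lemma fconsS n a (t : {ffun 'I_n -> V}) j : fcons a t (lift ord0 j) = t j.
Proof. by rewrite ffunE liftK. Qed.
Lemma ftail_cons n a (t : {ffun 'I_n -> V}) : ftail (fcons a t) = t.
Proof. by apply/ffunP => j; rewrite ffunE fconsS. Qed.
Lemma fcons_tail n (w : {ffun 'I_n.+1 -> V}) : fcons (w ord0) (ftail w) = w.
Proof.
apply/ffunP => j; case: (unliftP ord0 j) => [j'|] ->.
  by rewrite fconsS ffunE.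
by rewrite fcons0.
Qed.

Lemma sum_ffunS n (G : {ffun 'I_n.+1 -> V} -> R) :
  \sum_w G w = \sum_a \sum_(t : {ffun 'I_n -> V}) G (fcons a t).
Proof.
rewrite pair_big /=.
rewrite (reindex (fun p : V * {ffun 'I_n -> V} => fcons p.1 p.2)) //=.
apply: onW_bij.
exists (fun w : {ffun 'I_n.+1 -> V} => (w ord0, ftail w)).
  by case=> a t /=; rewrite fcons0 ftail_cons.
by move=> w /=; rewrite fcons_tail.
Qed.

Lemma sum_ffun0 (F : {ffun 'I_0 -> V} -> R) t0 : \sum_t F t = F t0.
Proof.
have H : forall t : {ffun 'I_0 -> V}, t = t0 by move=> t; apply/ffunP => -[].
rewrite (eq_bigl (fun t => t == t0)) ?big_pred1_eq // => t.
by rewrite (H t) eqxx.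
Qed.

Lemma walk_probS l (w : {ffun 'I_l.+2 -> V}) :
  walk_prob R adj w = trans R adj (w ord0) (w (lift ord0 ord0)) * walk_prob R adj (ftail w).
Proof.
rewrite /walk_prob big_ord_recl; congr (_ * _).
  by congr (trans _ _ (w _) _); apply: val_inj.
apply: eq_bigr => j _; rewrite !ffunE; congr (trans _ _ (w _) _); exact: val_inj.
Qed.

Lemma walk_prob0 (w : {ffun 'I_1 -> V}) : walk_prob R adj w = 1.
Proof. by rewrite /walk_prob big_ord0. Qed.

Lemma trans_ge0 u w : 0 <= trans R adj u w.
Proof. by rewrite /trans; case: ifP. Qed.

Lemma walk_prob_ge0 l (w : {ffun 'I_l.+1 -> V}) : 0 <= walk_prob R adj w.
Proof. by apply: prodr_ge0 => j _; exact: trans_ge0. Qed.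

End W.
Section W2.
Variables (V : finType) (K : nat) (Vtrain : {set V}) (lab : V -> 'I_K).

Lemma fhl_in l (w : {ffun 'I_l.+1 -> V}) i : w ord0 \in Vtrain ->
  first_hit_label Vtrain lab w i = (lab (w ord0) == i).
Proof.
move=> H; apply/existsP/idP.
  case=> k /and3P [Hk /forallP Hj Hl].
  have [k0|kpos] := posnP k.
    have Ek : k = ord0 by apply: val_inj.
    by move: Hl; rewrite Ek.
  by move: (Hj ord0); rewrite kpos H.
move=> Hl; exists ord0; rewrite H Hl andbT /=.
by apply/forallP => j.
Qed.

Lemma fhl_notin l (w : {ffun 'I_l.+2 -> V}) i : w ord0 \notin Vtrain ->
  first_hit_label Vtrain lab w i = first_hit_label Vtrain lab (ftail w) i.
Proof.
move=> H; apply/existsP/existsP.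
  case=> k /and3P [Hk /forallP Hj Hl].
  case: (unliftP ord0 k) => [k'|] Ek; last by move: Hk; rewrite Ek (negbTE H).
  exists k'; rewrite ffunE -Ek Hk Hl andbT /=.
  apply/forallP => j; apply/implyP => hj.
  rewrite ffunE; move: (Hj (lift ord0 j)); rewrite Ek /=.
  by rewrite /bump /= !add1n ltnS hj.
case=> k /and3P [Hk /forallP Hj Hl].
exists (lift ord0 k); move: Hk Hl; rewrite !ffunE => Hk Hl; rewrite Hk Hl andbT /=.
apply/forallP => j; apply/implyP => hj.
case: (unliftP ord0 j) => [j'|] Ej; last by rewrite Ej.
move: (Hj j'); rewrite ffunE -Ej => /implyP; apply.
by move: hj; rewrite Ej /= /bump /= !add1n ltnS.
Qed.

Lemma fhl_notin0 (w : {ffun 'I_1 -> V}) i : w ord0 \notin Vtrain ->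
  first_hit_label Vtrain lab w i = false.
Proof.
move=> H; apply/existsP => -[k /and3P [Hk _ _]].
by move: Hk; rewrite (ord1 k) (negbTE H).
Qed.

Definition hc k (w : {ffun 'I_k.+1 -> V}) (i : 'I_K) : bool :=
  [&& [forall j : 'I_k.+1, (j < k)%N ==> (w j \notin Vtrain)],
        w ord_max \in Vtrain & lab (w ord_max) == i].

Lemma hc0 (w : {ffun 'I_1 -> V}) i :
  hc w i = (w ord0 \in Vtrain) && (lab (w ord0) == i).
Proof.
rewrite /hc (ord1 ord_max).
have -> // : [forall j : 'I_1, (j < 0)%N ==> (w j \notin Vtrain)].
by apply/forallP => j; rewrite (ord1 j).
Qed.

Lemma hcS k (w : {ffun 'I_k.+2 -> V}) i :
  hc w i = (w ord0 \notin Vtrain) && hc (ftail w) i.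
Proof.
rewrite /hc.
have -> : (ord_max : 'I_k.+2) = lift ord0 ord_max by apply: val_inj.
rewrite !ffunE [RHS]andbA; congr andb.
apply/forallP/andP.
  move=> Hj; split; first by move: (Hj ord0).
  apply/forallP => j; rewrite ffunE; move: (Hj (lift ord0 j)).
  by rewrite /= /bump /= !add1n ltnS.
case=> H0 /forallP Hj j.
case: (unliftP ord0 j) => [j'|] ->; last by apply/implyP.
by move: (Hj j'); rewrite ffunE /= /bump /= !add1n ltnS.
Qed.

End W2.
Section W3.
Variables (R : realType) (V : finType) (adj : rel V).
Variables (K : nat) (Vtrain : {set V}) (lab : V -> 'I_K).

Lemma sum_walkS n v (Q : pred {ffun 'I_n.+2 -> V}) :
  \sum_(w : {ffun 'I_n.+2 -> V} | (w ord0 == v) && Q w) walk_prob R adj w =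
  \sum_u trans R adj v u *
     \sum_(t : {ffun 'I_n.+1 -> V} | (t ord0 == u) && Q (fcons v t)) walk_prob R adj t.
Proof.
rewrite big_mkcond sum_ffunS (bigD1 v) //= [X in _ + X]big1 ?addr0; last first.
  move=> a /negbTE Ha; apply: big1 => t _; by rewrite fcons0 Ha.
under eq_bigr => t _ do rewrite fcons0 eqxx /= walk_probS fconsS fcons0 ftail_cons.
rewrite -big_mkcond /=.
rewrite (partition_big (fun t : {ffun 'I_n.+1 -> V} => t ord0) xpredT) //=.
apply: eq_bigr => u _; rewrite mulr_sumr.
apply: eq_big => [t|t /andP [_ /eqP ->] //]; by rewrite andbC.
Qed.

Lemma sum_walk0 v (Q : pred {ffun 'I_1 -> V}) :
  \sum_(w : {ffun 'I_1 -> V} | (w ord0 == v) && Q w) walk_prob R adj w =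
  (Q (fcons v [ffun => v]))%:R.
Proof.
rewrite big_mkcond sum_ffunS (bigD1 v) //= [X in _ + X]big1 ?addr0; last first.
  move=> a /negbTE Ha; apply: big1 => t _; by rewrite fcons0 Ha.
rewrite (sum_ffun0 _ [ffun => v]) fcons0 eqxx walk_prob0 /=.
by case: (Q _).
Qed.

Definition mass n (u : V) : R :=
  \sum_(t : {ffun 'I_n.+1 -> V} | t ord0 == u) walk_prob R adj t.

Lemma mass0 u : mass 0 u = 1.
Proof.
rewrite /mass (eq_bigl (fun t : {ffun 'I_1 -> V} => (t ord0 == u) && xpredT t)).
  by rewrite sum_walk0.
by move=> t; rewrite andbT.
Qed.

Lemma massS n v : mass n.+1 v = \sum_u trans R adj v u * mass n u.
Proof.
rewrite /mass (eq_bigl (fun t : {ffun 'I_n.+2 -> V} => (t ord0 == v) && xpredT t)).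
  rewrite sum_walkS; apply: eq_bigr => u _; congr (_ * _).
  by apply: eq_bigl => t; rewrite andbT.
by move=> t; rewrite andbT.
Qed.

Notation p := (p_hit R adj Vtrain lab).
Notation hit := (hit_exactly R adj Vtrain lab).

Lemma p0 v i : p 0 v i = ((v \in Vtrain) && (lab v == i))%:R.
Proof.
rewrite /p_hit (sum_walk0 v (fun w => first_hit_label Vtrain lab w i)).
case: (boolP (v \in Vtrain)) => Hv.
  by rewrite fhl_in fcons0 ?Hv.
by rewrite fhl_notin0 ?fcons0.  
Qed.

Lemma pS l v i : p l.+1 v i =
  if v \in Vtrain then (lab v == i)%:R * \sum_u trans R adj v u * mass l u
  else \sum_u trans R adj v u * p l u i.
Proof.
rewrite /p_hit (sum_walkS v (fun w => first_hit_label Vtrain lab w i)); case: ifP => Hv.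
  rewrite mulr_sumr; apply: eq_bigr => u _; rewrite mulrCA; congr (_ * _).
  rewrite /mass [LHS]big_mkcond [X in _ * X]big_mkcond mulr_sumr; apply: eq_bigr => t _.
  rewrite fhl_in fcons0 ?Hv //.
  by case: (t ord0 == u); case: (lab v == i); rewrite /= ?mul1r ?mul0r.
apply: eq_bigr => u _; congr (_ * _); apply: eq_bigl => t.
by rewrite fhl_notin ?ftail_cons // fcons0 Hv.
Qed.

Lemma hit0 v i : hit 0 v i = ((v \in Vtrain) && (lab v == i))%:R.
Proof.
rewrite /hit_exactly.
rewrite (eq_bigl (fun w : {ffun 'I_1 -> V} => (w ord0 == v) && hc Vtrain lab w i)) //.
by rewrite (sum_walk0 v (fun w => hc Vtrain lab w i)) hc0 fcons0.
Qed.

Lemma hitS k v i : hit k.+1 v i =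
  if v \in Vtrain then 0 else \sum_u trans R adj v u * hit k u i.
Proof.
rewrite /hit_exactly.
rewrite (eq_bigl (fun w : {ffun 'I_k.+2 -> V} => (w ord0 == v) && hc Vtrain lab w i)) //.
rewrite (sum_walkS v (fun w => hc Vtrain lab w i)); case: ifP => Hv.
  apply: big1 => u _; rewrite big_pred0 ?mulr0 // => t.
  by rewrite hcS fcons0 Hv andbF.
apply: eq_bigr => u _; congr (_ * _); apply: eq_bigl => t.
by rewrite hcS fcons0 Hv ftail_cons.
Qed.

End W3.

Section W4.
Variables (R : realType) (V : finType) (adj : rel V).
Variables (K : nat) (Vtrain : {set V}) (lab : V -> 'I_K).
Hypothesis G : simple_connected_graph adj.

Lemma nbrs_gt0 v : (0 < #|nbrs adj v|)%N.
Proof.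
case: G => _ _ conn c2.
have : (0 < #|predC1 v|)%N by rewrite cardC1; case: #|V| c2 => [|[|]].
case/card_gt0P => u; rewrite !inE => Huv.
case/connectP: (conn v u) => [[|w s]] /=.
  by move=> _ E; rewrite E eqxx in Huv.
case/andP => Hvw _ _; apply/card_gt0P; exists w; by rewrite inE.
Qed.

Lemma trans_sum v (f : V -> R) :
  \sum_u trans R adj v u * f u = (#|nbrs adj v|%:R)^-1 * \sum_(u in nbrs adj v) f u.
Proof.
rewrite mulr_sumr [RHS]big_mkcond; apply: eq_bigr => u _.
by rewrite /trans inE; case: (adj v u); rewrite ?mul0r.
Qed.

Lemma trans_sum1 v : \sum_u trans R adj v u = 1.
Proof.
under eq_bigr => u _ do rewrite -[trans _ _ _ _]mulr1.
rewrite trans_sum sumr_const -[_ *+ _]mulr_natr mul1r mulVf //.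
by rewrite pnatr_eq0 -lt0n nbrs_gt0.
Qed.

Lemma mass1 n u : mass R adj n u = 1.
Proof.
elim: n u => [|n IH] u; first exact: mass0.
by rewrite massS; under eq_bigr => w _ do rewrite IH mulr1; rewrite trans_sum1.
Qed.

Notation p := (p_hit R adj Vtrain lab).
Notation hit := (hit_exactly R adj Vtrain lab).

Lemma pS' l v i : p l.+1 v i =
  if v \in Vtrain then (lab v == i)%:R
  else \sum_u trans R adj v u * p l u i.
Proof.
rewrite pS; case: ifP => // _.
by under eq_bigr => w _ do rewrite mass1 mulr1; rewrite trans_sum1 mulr1.
Qed.

Lemma p_ge0 l v i : 0 <= p l v i.
Proof. by apply: sumr_ge0 => w _; exact: walk_prob_ge0. Qed.

Lemma hit_ge0 l v i : 0 <= hit l v i.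
Proof. by apply: sumr_ge0 => w _; exact: walk_prob_ge0. Qed.

Lemma p_le1 l v i : p l v i <= 1.
Proof.
elim: l v => [|l IH] v; first by rewrite p0; case: (_ && _).
rewrite pS'; case: ifP => _; first by case: (_ == _).
rewrite -(trans_sum1 v); apply: ler_sum => u _.
by rewrite -[leRHS]mulr1; apply: ler_wpM2l; [exact: trans_ge0| exact: IH].
Qed.

Lemma p_series n v i : p n v i = \sum_(0 <= k < n.+1) hit k v i.
Proof.
elim: n v => [|n IH] v; first by rewrite big_nat1 p0 hit0.
rewrite big_nat_recl // pS' hit0.
case: (boolP (v \in Vtrain)) => Hv /=.
  rewrite big1 ?addr0 // => k _; by rewrite hitS Hv.
rewrite add0r.
under eq_bigr => u _ do rewrite IH mulr_sumr.
rewrite exchange_big /=; apply: eq_bigr => k _.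
by rewrite hitS (negbTE Hv).
Qed.

End W4.
Unset Implicit Arguments.

Lemma dsub_mul (R : realType) m1 m2 n (M : 'M[R]_(m1 + m2, n)) (h : 'cV[R]_n) :
  dsubmx (M *m h) = dsubmx M *m h.
Proof. by rewrite -{1}(vsubmxK M) mul_col_mx col_mxKd. Qed.

Lemma entry_id (R : realType) a b c (M : 'M[R]_(a + b, c + b)) (h : 'cV[R]_(c + b)) j :
  dsubmx M = row_mx 0 1%:M -> (M *m h) (rshift a j) 0 = h (rshift c j) 0.
Proof.
move=> HM.
have E : forall k (A : 'cV[R]_(k + b)), A (rshift k j) 0 = dsubmx A j 0 by move=> k A; rewrite mxE.
rewrite [LHS]E dsub_mul HM -{1}(vsubmxK h) mul_row_col mul0mx mul1mx add0r.
by rewrite mxE.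
Qed.

Lemma entry_0 (R : realType) a b c (M : 'M[R]_(a + b, c)) (h : 'cV[R]_c) j :
  dsubmx M = 0 -> (M *m h) (rshift a j) 0 = 0.
Proof.
move=> HM.
have E : forall k (A : 'cV[R]_(k + b)), A (rshift k j) 0 = dsubmx A j 0 by move=> k A; rewrite mxE.
by rewrite [LHS]E dsub_mul HM mul0mx mxE.
Qed.

Lemma mean_entry (R : realType) (V : finType) (adj : rel V) p q (M : 'M[R]_(p, q)) h v r :
  mean_nbr adj M h v r 0 = (#|nbrs adj v|%:R)^-1 * \sum_(u in nbrs adj v) (M *m h u) r 0.
Proof. by rewrite /mean_nbr mxE summxE. Qed.

Theorem tfgnn_p (R : realType) (V : finType) (adj : rel V)
  (K : nat) (Vtrain : {set V}) (lab : V -> 'I_K)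
  (e : nat -> nat) (x : V -> 'cV[R]_(e 0%N))
  (S Vw T W : forall l : nat, 'M[R]_(e l.+1 + (1 + K), e l + (1 + K))) :
  simple_connected_graph adj ->
  (forall l, dsubmx (S l) = row_mx 0 1%:M) ->
  (forall l, dsubmx (Vw l) = 0) ->
  (forall l, dsubmx (T l) = 0) ->
  (forall l, dsubmx (W l) = row_mx 0 1%:M) ->
  forall l v i, tfgnn adj Vtrain lab x S Vw T W l v (rshift (e l) (rshift 1 i)) 0
     = p_hit R adj Vtrain lab l v i.
Proof.
move=> G HS HV HT HW l; elim: l => [|l IH] v i.
  rewrite /= col_mxEd /label_feat p0; case: (v \in Vtrain) => /=.
    by rewrite col_mxEd mxE eq_sym.
  by rewrite mxE.
rewrite (@pS' R V adj K Vtrain lab G) /= /relu mxE; case: (boolP (v \in Vtrain)) => Hv.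
  rewrite mxE mean_entry (@entry_id _ _ _ _ _ _ _ (HS l)) IH.
  rewrite big1 ?mulr0 ?addr0; last by move=> u _; rewrite (@entry_0 _ _ _ _ _ _ _ (HV l)).
  have -> : p_hit R adj Vtrain lab l v i = (lab v == i)%:R.
    by case: l {IH} => [|l]; rewrite ?p0 ?(@pS' R V adj K Vtrain lab G) Hv.
  by apply/max_idPl; case: (_ == _).
rewrite mxE mean_entry (@entry_0 _ _ _ _ _ _ _ (HT l)) add0r.
rewrite [X in Num.max (_ * X) _](eq_bigr (fun u => p_hit R adj Vtrain lab l u i)); last by move=> u _; rewrite (@entry_id _ _ _ _ _ _ _ (HW l)) IH.
rewrite -trans_sum; apply/max_idPl.
by apply: sumr_ge0 => u _; apply: mulr_ge0; [exact: trans_ge0 | exact: p_ge0].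
Qed.

Lemma softmax_le (R : realType) n (z : 'cV[R]_n) i j :
  (softmax z j 0 <= softmax z i 0) = (z j 0 <= z i 0).
Proof.
rewrite !mxE ler_pM2r ?ler_expR // invr_gt0.
rewrite (bigD1 i) //=; have := expR_gt0 (z i 0).
have : 0 <= \sum_(k | k != i) expR (z k 0) by apply: sumr_ge0 => k _; exact: expR_ge0.
lra.
Qed.

Theorem proposition2 (R : realType) (V : finType) (adj : rel V)
  (K : nat) (Vtrain : {set V}) (lab : V -> 'I_K)
  (e : nat -> nat) (x : V -> 'cV[R]_(e 0%N))
  (S Vw T W : forall l : nat, 'M[R]_(e l.+1 + (1 + K), e l + (1 + K)))
  (L : nat) (U : 'M[R]_(K, e L + (1 + K))) :
  simple_connected_graph adj ->
  (0 < #|Vtrain|)%N ->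
  (forall l, dsubmx (S l) = row_mx 0 1%:M) ->
  (forall l, dsubmx (Vw l) = 0) ->
  (forall l, dsubmx (T l) = 0) ->
  (forall l, dsubmx (W l) = row_mx 0 1%:M) ->
  (forall (i : 'I_K) (j : 'I_(e L + (1 + K))),
      U i j = ((j : nat) == e L + 1 + i)%N%:R) ->
  let h := tfgnn adj Vtrain lab x S Vw T W in
  let p := p_hit R adj Vtrain lab in
  [/\ (forall (v : V) (i : 'I_K), h L v (rshift (e L) (rshift 1 i)) 0 = p L v i),
      (forall (v : V) (i : 'I_K),
         (forall j, softmax (U *m h L v) j 0 <= softmax (U *m h L v) i 0) <->
         (forall j, p L v j <= p L v i)) &
      (forall v : V, v \notin Vtrain -> forall i : 'I_K,
         ((fun n => p n v i) @ \oo --> lp_output R adj Vtrain lab v i)%classic)].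
Proof.
move=> G _ HS HV HT HW HU h p.
have P1 := @tfgnn_p R V adj K Vtrain lab e x S Vw T W G HS HV HT HW L.
have Uh : forall v i, (U *m h L v) i 0 = p L v i.
  move=> v i; rewrite mxE (bigD1 (rshift (e L) (rshift 1 i))) //= HU.
  rewrite /= addnA eqxx mul1r big1 ?addr0; first exact: P1.
  move=> j Hj; rewrite HU; have [Ej|_] := eqP; last by rewrite mul0r.
  exfalso; move/negP: Hj; apply; apply/eqP/val_inj; by rewrite /= Ej addnA.
split.
- exact: P1.
- move=> v i; split => H j; move: (H j).
    by rewrite softmax_le !Uh.
  by rewrite softmax_le !Uh.
- move=> v Hv i.
  set u := fun k => hit_exactly R adj Vtrain lab k v i.
  have Ep : forall n, p n v i = series u n.+1.
    by move=> n; rewrite /p (@p_series R V adj K Vtrain lab G) seriesEnat.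
  have Hmono : {homo series u : n m / (n <= m)%N >-> n <= m}.
    apply/nondecreasing_seqP => n; rewrite seriesSr lerDl; exact: hit_ge0.
  have Hub : has_ubound (range (series u)).
    exists 1 => _ [n _ <-]; apply: (le_trans (Hmono _ _ (leqnSn n))).
    by rewrite -Ep; exact: p_le1.
  have Hc := nondecreasing_is_cvgn Hmono Hub.
  rewrite /lp_output -/u.
  have -> : (fun n => p n v i) = (fun n => series u n.+1) by apply: funext => n; exact: Ep.
  by rewrite (cvg_shiftS (series u)).
Qed.
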